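(* Let $H$ be a triangle-free simple graph and $k\ge1$. Then $\nu(I_k \vee H) = \alpha'_k(H)$ and $\tau(I_k \vee H) = k|V(H)| - \phi_k(H)$.
   Context: $I_k$ is an independent set of $k$ vertices; the join $G_1\vee G_2$ is obtained from the disjoint union of $G_1,G_2$ by adding all edges between $V(G_1)$ and $V(G_2)$. For a graph $G$, $\tau(G)$ is the minimum size of an edge set $X$ with $G-X$ triangle-free, and $\nu(G)$ is the maximum number of pairwise edge-disjoint triangles in $G$. $\alpha'_k(G)$ is the maximum number of edges of a $k$-edge-colorable subgraph of $G$. For $D\subseteq V(G)$, $\phi_k(D)=k|D|-|E(G[D])|$ and $\phi_k(G)=\max_{D\subseteq V(G)}\phi_k(D)$. *)

(* Defs.v *)
(* Simple graphs on a finType V given by a symmetric,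
   irreflexive relation r : rel V. Edges are 2-element vertex sets. *)
From HB Require Import structures.
From mathcomp Require Import all_boot all_order all_algebra.
Set Implicit Arguments. Unset Strict Implicit. Unset Printing Implicit Defensive.
Import Order.TTheory GRing.Theory Num.Theory.

Section Graphs.
Variable V : finType.
Implicit Types (r : rel V) (F : {set {set V}}).

Definition edges r : {set {set V}} :=
  [set E : {set V} | [exists x : V, exists y : V, r x y && (E == [set x; y])]].

Definition is_triangle F (t : {set V}) : bool :=
  (#|t| == 3) &&
  [forall x in t, forall y in t, (x != y) ==> ([set x; y] \in F)].

Definition triangle_freeE F : bool := [forall t : {set V}, ~~ is_triangle F t].

Definition tri_edges F (t : {set V}) : {set {set V}} := [set E in F | E \subset t].

Definition tau r : nat :=
  \big[minn/#|edges r|]_(X : {set {set V}} |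
      (X \subset edges r) && triangle_freeE (edges r :\: X)) #|X|.

Definition tri_packing r (P : {set {set V}}) : bool :=
  [forall t in P, is_triangle (edges r) t] &&
  [forall t1 in P, forall t2 in P,
     (t1 != t2) ==> [disjoint tri_edges (edges r) t1 & tri_edges (edges r) t2]].

Definition nu r : nat :=
  \max_(P : {set {set V}} | tri_packing r P) #|P|.

Definition k_edge_colorable (k : nat) F : bool :=
  [exists c : {ffun {set V} -> 'I_k},
     [forall E1 in F, forall E2 in F,
        ((E1 != E2) && (E1 :&: E2 != set0)) ==> (c E1 != c E2)]].

Definition alpha'_ (k : nat) r : nat :=
  \max_(F : {set {set V}} | (F \subset edges r) && k_edge_colorable k F) #|F|.

Definition induced_edges r (D : {set V}) : {set {set V}} :=
  [set E in edges r | E \subset D].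

Definition phi_set (k : nat) r (D : {set V}) : int :=
  (k * #|D|)%:Z - (#|induced_edges r D|)%:Z.

(* phi_k(G) = max_D phi_k(D); the empty set gives 0, so starting the
   fold at 0 does not change the value *)
Definition phi_ (k : nat) r : int :=
  \big[Num.max/0%R]_(D : {set V}) phi_set k r D.

End Graphs.

Definition join_Ik (k : nat) (T : finType) (r : rel T) : rel ('I_k + T)%type :=
  fun x y => match x, y with
             | inl _, inl _ => false
             | inl _, inr _ => true
             | inr _, inl _ => true
             | inr a, inr b => r a b
             end.
Arguments join_Ik k {T} r.

(* Main.v *)
Require Import Defs.
From HB Require Import structures.
From mathcomp Require Import all_boot all_order all_algebra.
From mathcomp Require Import zify.
Set Implicit Arguments. Unset Strict Implicit. Unset Printing Implicit Defensive.
Import Order.TTheory GRing.Theory Num.Theory.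

Section Generic.
Variable V : finType.

Lemma set2_in (x y : V) (E : {set V}) : x \in E -> y \in E -> [set x; y] \subset E.
Proof. by move=> hx hy; apply/subsetP => z; rewrite !inE => /orP[]/eqP->. Qed.

Lemma card3 (x y z : V) : x != y -> y != z -> z != x -> #|[set x; y; z]| = 3.
Proof.
move=> xy yz zx; rewrite -setUA cardsU1 cardsU1 cards1 !inE.
by rewrite (negbTE xy) eq_sym (negbTE zx) (negbTE yz).
Qed.

Lemma edge_set (g : rel V) (gs : symmetric g) (x y : V) :
  ([set x; y] \in edges g) = g x y.
Proof.
apply/idP/idP.
  rewrite inE => /existsP[x' /existsP[y' /andP[g' /eqP E]]].
  have hx : x \in [set x'; y'] by rewrite -E !inE eqxx.
  have hy : y \in [set x'; y'] by rewrite -E !inE eqxx orbT.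
  have hx' : x' \in [set x; y] by rewrite E !inE eqxx.
  have hy' : y' \in [set x; y] by rewrite E !inE eqxx orbT.
  move: hx hy hx' hy'; rewrite !inE.
  move=> /orP[]/eqP ex /orP[]/eqP ey /orP[]/eqP ex' /orP[]/eqP ey'; subst;
    by rewrite // gs.
by move=> gxy; rewrite inE; apply/existsP; exists x; apply/existsP; exists y; rewrite gxy eqxx.
Qed.

Lemma edgesP (g : rel V) (E : {set V}) :
  reflect (exists x y, g x y /\ E = [set x; y]) (E \in edges g).
Proof.
rewrite inE; apply: (iffP existsP) => [[x /existsP[y /andP[gxy /eqP->]]]|[x [y [gxy ->]]]].
  by exists x, y.
by exists x; apply/existsP; exists y; rewrite gxy eqxx.
Qed.

Lemma triP (g : rel V) (gs : symmetric g) (t : {set V}) :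
  is_triangle (edges g) t =
  (#|t| == 3) && [forall x in t, forall y in t, (x != y) ==> g x y].
Proof.
rewrite /is_triangle; congr (_ && _); apply: eq_forallb_in => x _.
by apply: eq_forallb_in => y _; rewrite edge_set.
Qed.

Lemma triP' (g : rel V) (gs : symmetric g) (t : {set V}) :
  is_triangle (edges g) t ->
  #|t| = 3 /\ forall x y, x \in t -> y \in t -> x != y -> g x y.
Proof.
rewrite triP // => /andP[/eqP c /forallP h]; split => // x y hx hy nxy.
by move: (h x); rewrite hx => /forallP/(_ y); rewrite hy nxy.
Qed.

Lemma triI (g : rel V) (gs : symmetric g) (t : {set V}) :
  #|t| = 3 -> (forall x y, x \in t -> y \in t -> x != y -> g x y) ->
  is_triangle (edges g) t.
Proof.
move=> c h; rewrite triP // c eqxx /=; apply/forallP => x; apply/implyP => hx.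
by apply/forallP => y; apply/implyP => hy; apply/implyP; apply: h.
Qed.

Lemma set3P (x a b c : V) : x \in [set a; b; c] -> [\/ x = a, x = b | x = c].
Proof. by rewrite !inE => /orP[/orP[]|] /eqP; [constructor 1|constructor 2|constructor 3]. Qed.

End Generic.

Lemma bigmin_le (I : finType) (P : pred I) (F : I -> nat) x i0 :
  P i0 -> \big[minn/x]_(i | P i) F i <= F i0.
Proof.
move=> Pi0; have : i0 \in index_enum I by rewrite mem_index_enum.
elim: (index_enum I) => [|a s IH] //; rewrite big_cons inE.
case/orP => [/eqP <-|his]; first by rewrite Pi0 geq_minl.
by case: (P a) => /=; [exact: leq_trans (geq_minr _ _) (IH his) | exact: IH].
Qed.

Lemma bigmax_ge (I : finType) (F : I -> int) x i0 :
  (F i0 <= \big[Num.max/x]_i F i)%R.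
Proof.
have : i0 \in index_enum I by rewrite mem_index_enum.
elim: (index_enum I) => [|a s IH] //; rewrite big_cons inE.
case/orP => [/eqP <-|his]; first by rewrite le_max lexx.
by rewrite le_max (IH his) orbT.
Qed.

Section Join.
Variables (T : finType) (r : rel T) (k : nat).
Hypotheses (r_sym : symmetric r) (r_irr : irreflexive r)
  (H_tf : triangle_freeE (edges r)) (k_pos : 0 < k).

Local Notation W := ('I_k + T)%type.
Local Notation j := (join_Ik k r).

Lemma j_sym : symmetric j.
Proof. by case=> [a|u] [b|v] //=; rewrite r_sym. Qed.

Lemma tri_mk (a : 'I_k) u v : r u v -> is_triangle (edges j) [set inl a; inr u; inr v].
Proof.
move=> ruv; have nuv : u != v by apply: contraTneq ruv => ->; rewrite r_irr.
apply: triI; first exact: j_sym.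
  by apply: card3 => //; rewrite eq_sym.
move=> x y /set3P[->|->|->] /set3P[->|->|->]; rewrite ?eqxx //= => _.
by rewrite r_sym.
Qed.

Lemma tri_shape t : is_triangle (edges j) t ->
  exists a u v, r u v /\ t = [set inl a; inr u; inr v].
Proof.
move=> /(triP' j_sym) [c h].
have : 2 < #|t| by rewrite c.
move=> /card_gt2P [x [y [z [[hx hy hz] [xy yz zx]]]]].
have et : t = [set x; y; z].
  apply/eqP; rewrite eq_sym eqEcard c card3 // leqnn andbT.
  by apply/subsetP => w /set3P[->|->|->].
have hxy := h _ _ hx hy xy; have hyz := h _ _ hy hz yz; have hzx := h _ _ hz hx zx.
move: et xy yz zx hxy hyz hzx {hx hy hz h}.
case: x => [a|u]; case: y => [b|v]; case: z => [e|w] //= -> xy yz zx hxy hyz hzx.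
- by exists a, v, w.
- by exists b, w, u; split => //; apply/setP => p; rewrite !inE; do 3!(case: eqP => //=).
- by exists e, u, v; split => //; apply/setP => p; rewrite !inE; do 3!(case: eqP => //=).
- exfalso; move: H_tf => /forallP /(_ [set u; v; w]) /negP; apply.
  apply: triI => //; first by apply: card3.
  by move=> p q; move=> /set3P[->|->|->] /set3P[->|->|->]; rewrite ?eqxx // r_sym.
Qed.


Lemma disj_contra (A B : {set {set W}}) e : [disjoint A & B] -> e \in A -> e \in B -> False.
Proof.
rewrite -setI_eq0 => /eqP h eA eB.
have : e \in A :&: B by rewrite inE eA eB.
by rewrite h inE.
Qed.

Lemma inr_imset (S : {set T}) w : (inr w \in (inr @: S : {set W})) = (w \in S).
Proof. by apply: mem_imset => x y [->]. Qed.

Lemma inl_imset (S : {set T}) b : (inl b \in (inr @: S : {set W})) = false.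
Proof. by apply/negP => /imsetP[]. Qed.

Lemma edge_uniq E u v : E \in edges r -> u \in E -> v \in E -> u != v -> E = [set u; v].
Proof.
move=> /edgesP[x [y [rxy ->]]] hu hv nuv.
have nxy : x != y by apply: contraTneq rxy => ->; rewrite r_irr.
apply/eqP; rewrite eq_sym eqEcard set2_in //= !cards2 nxy nuv //.
Qed.

Lemma edge_neq E : E \in edges r -> exists u v, [/\ r u v, u != v & E = [set u; v]].
Proof.
move=> /edgesP[x [y [rxy ->]]]; exists x, y; split => //.
by apply: contraTneq rxy => ->; rewrite r_irr.
Qed.

Definition fT (a : 'I_k) (E : {set T}) : {set W} := inl a |: (inr @: E).

Lemma g_fT a E : inr @^-1: fT a E = E.
Proof. by apply/setP => w; rewrite !inE /= inr_imset. Qed.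

Lemma fT_tri a E : E \in edges r -> is_triangle (edges j) (fT a E).
Proof.
move=> /edge_neq[u [v [ruv _ ->]]].
suff -> : fT a [set u; v] = [set inl a; inr u; inr v] by apply: tri_mk.
apply/setP => -[b|w]; rewrite !inE ?inl_imset ?inr_imset /= ?inE ?orbF ?orbA //.
Qed.

Lemma mem_fT a E p : (p \in fT a E) = match p with inl b => b == a | inr w => w \in E end.
Proof. by case: p => [b|w]; rewrite !inE ?inl_imset ?inr_imset //= orbF. Qed.

Lemma alpha_le_nu : alpha'_ k r <= nu j.
Proof.
apply/bigmax_leqP => F /andP[FE /existsP[c /forallP hc]].
have inj : {in F &, injective (fun E => fT (c E) E)}.
  by move=> E1 E2 _ _ e; rewrite -(g_fT (c E1) E1) e g_fT.
rewrite -(card_in_imset inj); apply: leq_bigmax_cond.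
apply/andP; split.
  apply/forallP => t; apply/implyP => /imsetP[E EF ->].
  by apply: fT_tri; apply: (subsetP FE).
apply/forallP => t1; apply/implyP => /imsetP[E1 E1F ->].
apply/forallP => t2; apply/implyP => /imsetP[E2 E2F ->].
apply/implyP => n12.
have nE : E1 != E2 by apply: contraNneq n12 => ->.
rewrite -setI_eq0; apply/eqP/setP => e; rewrite !inE.
apply/negP => /andP[/andP[ej s1] /andP[_ s2]].
have E1e := subsetP FE _ E1F; have E2e := subsetP FE _ E2F.
move: ej s1 s2 => /existsP[x /existsP[y /andP[jxy /eqP ->]]].
rewrite !subUset !sub1set !mem_fT.
case: x y jxy => [a|u] [b|v] //= jxy.
- move=> /andP[/eqP ea v1] /andP[/eqP eb v2].
  move: (hc E1) => /implyP /(_ E1F) /forallP /(_ E2) /implyP /(_ E2F).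
  rewrite nE /= -ea -eb eqxx /= implybF negbK => /eqP e0.
  have : v \in E1 :&: E2 by rewrite inE v1 v2.
  by rewrite e0 inE.
- move=> /andP[u1 /eqP ea] /andP[u2 /eqP eb].
  move: (hc E1) => /implyP /(_ E1F) /forallP /(_ E2) /implyP /(_ E2F).
  rewrite nE /= -ea -eb eqxx /= implybF negbK => /eqP e0.
  have : u \in E1 :&: E2 by rewrite inE u1 u2.
  by rewrite e0 inE.
- move=> /andP[u1 v1] /andP[u2 v2].
  have nuv : u != v by apply: contraTneq jxy => ->; rewrite r_irr.
  by move: nE; rewrite (edge_uniq E1e u1 v1 nuv) (edge_uniq E2e u2 v2 nuv) eqxx.
Qed.

Definition gT (t : {set W}) : {set T} := inr @^-1: t.

Lemma mem_gT t w : (w \in gT t) = (inr w \in t).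
Proof. by rewrite inE. Qed.

Lemma tri_edgesI (e t : {set W}) : e \in edges j -> e \subset t -> e \in tri_edges (edges j) t.
Proof. by move=> h1 h2; rewrite /tri_edges in_set h1 h2. Qed.

Lemma nu_le_alpha : nu j <= alpha'_ k r.
Proof.
apply/bigmax_leqP => P /andP[/forallP Ptri /forallP Pdis].
have triP t : t \in P -> exists a u v, r u v /\ t = [set inl a; inr u; inr v].
  by move=> tP; apply: tri_shape; move: (Ptri t); rewrite tP.
have disP t1 t2 : t1 \in P -> t2 \in P -> t1 != t2 ->
    [disjoint tri_edges (edges j) t1 & tri_edges (edges j) t2].
  move=> h1 h2 n; move: (Pdis t1); rewrite h1 => /forallP /(_ t2).
  by rewrite h2 n.
have inj : {in P &, injective gT}.
  move=> t1 t2 h1 h2 e; apply/eqP; apply/negPn/negP => n.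
  have [a [u [v [ruv et1]]]] := triP t1 h1.
  apply: (disj_contra (e := [set inr u; inr v]) (disP _ _ h1 h2 n)).
    apply: tri_edgesI; first by rewrite (edge_set j_sym).
    by apply: set2_in; rewrite et1 !inE eqxx ?orbT.
  apply: tri_edgesI; first by rewrite (edge_set j_sym).
  have hu : u \in gT t1 by rewrite mem_gT et1 !inE eqxx ?orbT.
  have hv : v \in gT t1 by rewrite mem_gT et1 !inE eqxx ?orbT.
  by rewrite e !mem_gT in hu hv; apply: set2_in.
pose a0 : 'I_k := Ordinal k_pos.
pose c : {ffun {set T} -> 'I_k} :=
  [ffun E => odflt a0 [pick b | [exists t in P, (gT t == E) && (inl b \in t)]]].
have cP t : t \in P -> inl (c (gT t)) \in t.
  move=> tP; rewrite /c ffunE; case: pickP => [b /existsP[t' /andP[t'P /andP[/eqP e bt]]]|].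
    by rewrite /= -(inj _ _ t'P tP e).
  have [a [u [v [ruv et]]]] := triP t tP.
  by move=> /(_ a) /existsP; case; exists t; rewrite tP eqxx et !inE eqxx.
rewrite -(card_in_imset inj); apply: leq_bigmax_cond; apply/andP; split.
  apply/subsetP => E /imsetP[t tP ->].
  have [a [u [v [ruv et]]]] := triP t tP.
  suff -> : gT t = [set u; v] by rewrite (edge_set r_sym).
  by apply/setP => w; rewrite mem_gT et !inE.
rewrite /k_edge_colorable; apply/existsP; exists c; apply/forallP => E1; apply/implyP => /imsetP[t1 t1P ->].
apply/forallP => E2; apply/implyP => /imsetP[t2 t2P ->].
apply/implyP => /andP[n12 /set0Pn[w]]; rewrite inE !mem_gT => /andP[w1 w2].
apply/negP => /eqP ec.
have n : t1 != t2 by apply: contraNneq n12 => ->.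
apply: (disj_contra (e := [set inl (c (gT t1)); inr w]) (disP _ _ t1P t2P n)).
  apply: tri_edgesI; first by rewrite (edge_set j_sym).
  by apply: set2_in => //; apply: cP.
apply: tri_edgesI; first by rewrite (edge_set j_sym).
by apply: set2_in => //; rewrite ec; apply: cP.
Qed.


Lemma tri_pair (F : {set {set W}}) (t : {set W}) (x y : W) : is_triangle F t -> x \in t -> y \in t -> x != y -> [set x; y] \in F.
Proof.
move=> /andP[_ /forallP h] hx hy nxy.
by move: (h x); rewrite hx => /forallP /(_ y); rewrite hy nxy.
Qed.

Lemma tri_mono (F1 F2 : {set {set W}}) t : F1 \subset F2 -> is_triangle F1 t -> is_triangle F2 t.
Proof.
move=> s /andP[c /forallP h]; rewrite /is_triangle c /=.
apply/forallP => x; apply/implyP => hx; apply/forallP => y; apply/implyP => hy.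
apply/implyP => nxy; apply: (subsetP s).
by move: (h x); rewrite hx => /forallP /(_ y); rewrite hy nxy.
Qed.

Lemma set2_sym (x y : W) : [set x; y] = [set y; x].
Proof. by apply/setP => z; rewrite !inE orbC. Qed.

Lemma inr_set2 (u v : T) : (inr @: [set u; v] : {set W}) = [set inr u; inr v].
Proof. by apply/setP => -[b|w]; rewrite ?inl_imset ?inr_imset !inE. Qed.

Definition XD (D : {set T}) : {set {set W}} :=
  [set [set inl p.1; inr p.2] | p in setX [set: 'I_k] (~: D)] :|:
  [set (inr @: E : {set W}) | E : {set T} in induced_edges r D].

Lemma XD_card D : #|XD D| <= k * #|~: D| + #|induced_edges r D|.
Proof.
rewrite /XD cardsU; apply: leq_trans (leq_subr _ _) _.
apply: leq_add; last exact: leq_imset_card.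
by apply: leq_trans (leq_imset_card _ _) _; rewrite cardsX cardsT card_ord.
Qed.

Lemma XD_sub D : XD D \subset edges j.
Proof.
apply/subsetP => e; rewrite inE => /orP[] /imsetP[p hp ->].
  by rewrite (edge_set j_sym).
move: hp; rewrite /induced_edges in_set => /andP[/edge_neq[u [v [ruv _ ->]]] _].
by rewrite inr_set2 (edge_set j_sym).
Qed.

Lemma XD_tf D : triangle_freeE (edges j :\: XD D).
Proof.
apply/forallP => t; apply/negP => ht.
have [a [u [v [ruv et]]]] := tri_shape (tri_mono (subsetDl _ _) ht).
have nuv : u != v by apply: contraTneq ruv => ->; rewrite r_irr.
have inD w : inr w \in t -> w \in D.
  move=> hw; apply/negPn/negP => wD.
  have ha : inl a \in t by rewrite et !inE eqxx.
  have := tri_pair ht ha hw isT; rewrite in_setD => /andP[/negP hX _]; apply: hX.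
  rewrite /XD in_setU; apply/orP; left; apply/imsetP; exists (a, w) => //.
  by rewrite !inE.
have uD : u \in D by apply: inD; rewrite et !inE eqxx ?orbT.
have vD : v \in D by apply: inD; rewrite et !inE eqxx ?orbT.
have hu : inr u \in t by rewrite et !inE eqxx ?orbT.
have hv : inr v \in t by rewrite et !inE eqxx ?orbT.
have := tri_pair ht hu hv nuv; rewrite in_setD => /andP[/negP hX _]; apply: hX.
rewrite /XD in_setU; apply/orP; right; apply/imsetP; exists [set u; v]; last by rewrite inr_set2.
by rewrite /induced_edges in_set (edge_set r_sym) ruv; apply: set2_in.
Qed.

Lemma tau_le (X : {set {set W}}) : X \subset edges j -> triangle_freeE (edges j :\: X) -> tau j <= #|X|.
Proof. by move=> h1 h2; apply: bigmin_le; rewrite h1 h2. Qed.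

Lemma tau_upper D : tau j <= k * #|~: D| + #|induced_edges r D|.
Proof. exact: leq_trans (tau_le (XD_sub D) (XD_tf D)) (XD_card D). Qed.


Lemma tri_from (X : {set {set W}}) t : is_triangle (edges j) t ->
  (forall x y, x \in t -> y \in t -> x != y -> [set x; y] \notin X) ->
  is_triangle (edges j :\: X) t.
Proof.
move=> ht h; have /andP[c _] := ht; rewrite /is_triangle c /=.
apply/forallP => x; apply/implyP => hx; apply/forallP => y; apply/implyP => hy.
by apply/implyP => nxy; rewrite in_setD h //= (tri_pair ht hx hy nxy).
Qed.

Lemma tau_lower (X : {set {set W}}) : X \subset edges j -> triangle_freeE (edges j :\: X) ->
  exists D, k * #|~: D| + #|induced_edges r D| <= #|X|.
Proof.
move=> XE Xtf.
pose a0 : 'I_k := Ordinal k_pos.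
pose S a := [set x | [set inl a; inr x] \in X].
case: (@arg_minnP _ a0 predT (fun a => #|S a|) isT) => am _ amin.
exists (~: S am); rewrite setCK.
set D := ~: S am.
pose Pset := [set p : 'I_k * T | p.2 \in S p.1].
pose A1 : {set {set W}} := [set [set inl p.1; inr p.2] | p in Pset].
pose A2 : {set {set W}} := [set (inr @: E : {set W}) | E : {set T} in induced_edges r D].
have c1 : #|A1| = #|Pset|.
  apply: card_in_imset => -[a x] [b y] _ _ /= e.
  have : inl a \in [set inl b; inr y] by rewrite -e !inE eqxx.
  have : inr x \in [set inl b; inr y] by rewrite -e !inE eqxx orbT.
  by rewrite !inE /= => /eqP [->] /orP[/eqP [->] //|/eqP //].
have c2 : #|A2| = #|induced_edges r D|.
  apply: card_in_imset => E1 E2 _ _ eE.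
  by rewrite -(g_fT a0 E1) -(g_fT a0 E2) /fT eE.
have c3 : k * #|S am| <= #|Pset|.
  have -> : #|Pset| = \sum_a #|S a|.
    rewrite -sum1_card.
    transitivity (\sum_a \sum_x (if x \in S a then 1 else 0)); last first.
      by apply: eq_bigr => a _; rewrite -sum1_card [RHS]big_mkcond.
    rewrite pair_bigA big_mkcond /=; apply: eq_bigr => -[a x] _.
    by rewrite inE.
  rewrite -[in X in X * _](card_ord k) -sum_nat_const.
  by apply: leq_sum => a _; apply: amin.
have c4 : A1 :|: A2 \subset X.
  apply/subsetP => e; rewrite in_setU => /orP[] /imsetP[p hp ->].
    by move: hp; rewrite !inE.
  move: hp; rewrite /induced_edges in_set => /andP[/edge_neq[u [v [ruv nuv ->]]] sD].
  have uD : u \in D by apply: (subsetP sD); rewrite !inE eqxx.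
  have vD : v \in D by apply: (subsetP sD); rewrite !inE eqxx orbT.
  rewrite inr_set2; apply/negPn/negP => nX.
  move: Xtf => /forallP /(_ [set inl am; inr u; inr v]) /negP; apply.
  apply: tri_from; first exact: tri_mk.
  have nX1 w : w \in D -> [set inl am; inr w] \notin X.
    by rewrite /D !inE.
  move=> x y /set3P[->|->|->] /set3P[->|->|->]; rewrite ?eqxx //= => _;
    rewrite ?nX1 //; rewrite set2_sym ?nX1 //.
have c5 : A1 :&: A2 = set0.
  apply/setP => ee; rewrite !inE; apply/negP => /andP[/imsetP[p _ ->] /imsetP[E _ e2]].
  have : inl p.1 \in [set inl p.1; inr p.2] by rewrite !inE eqxx.
  by rewrite e2 inl_imset.
rewrite -c2; apply: leq_trans (subset_leq_card c4); rewrite cardsU c5 cards0 subn0 c1.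
by rewrite leq_add2r.
Qed.


Lemma e0 : induced_edges r set0 = set0.
Proof.
apply/setP => E; rewrite /induced_edges in_set in_set0; apply/negP.
move=> /andP[/edge_neq[u [v [_ _ ->]]] /subsetP /(_ u)].
by rewrite !inE eqxx => /(_ isT).
Qed.

Lemma main_sec : nu j = alpha'_ k r /\
  Posz (tau j) = (Posz (k * #|T|) - phi_ k r)%R.
Proof.
split; first by apply/anti_leq; rewrite nu_le_alpha alpha_le_nu.
have hC (D : {set T}) : #|D| + #|~: D| = #|T| by rewrite cardsC.
apply/eqP; rewrite eq_le; apply/andP; split.
  suff : (phi_ k r <= Posz (k * #|T|) - Posz (tau j))%R by lia.
  rewrite /phi_; apply: (big_ind (fun x => x <= Posz (k * #|T|) - Posz (tau j))%R).
  - have := tau_upper set0; rewrite e0 cards0 setC0 cardsT addn0.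
    lia.
  - by move=> x y hx hy; rewrite ge_max hx hy.
  - move=> D _; have := tau_upper D; rewrite /phi_set -(hC D) mulnDr.
    set a := k * #|D|; set b := k * #|~: D|; clearbody a b.
    lia.
rewrite /tau; apply: (big_ind (fun n : nat => Posz (k * #|T|) - phi_ k r <= Posz n)%R).
- have tf : triangle_freeE (edges j :\: edges j).
    rewrite setDv; apply/forallP => t; apply/negP => /andP[/eqP c /forallP h].
    have : 2 < #|t| by rewrite c.
    move=> /card_gt2P [x [y [z [[hx hy hz] [xy _ _]]]]].
    by move: (h x); rewrite hx => /forallP /(_ y); rewrite hy xy inE.
  have [D hD] := tau_lower (subxx (edges j)) tf.
  have := bigmax_ge (phi_set k r) 0 D; rewrite -/(phi_ k r) /phi_set.
  rewrite -(hC D) mulnDr; move: hD; set a := k * #|D|; set b := k * #|~: D|; clearbody a b.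
  move: (#|induced_edges r D|) (#|edges j|) (phi_ k r) => e E p. lia.
- move=> x y hx hy; rewrite /minn; by case: ifP.
- move=> X /andP[h1 h2]; have [D hD] := tau_lower h1 h2.
  have := bigmax_ge (phi_set k r) 0 D; rewrite -/(phi_ k r) /phi_set.
  rewrite -(hC D) mulnDr; move: hD; set a := k * #|D|; set b := k * #|~: D|; clearbody a b.
  move: (#|induced_edges r D|) (#|X|) (phi_ k r) => e E p. lia.
Qed.

End Join.

Theorem mainTheorem7 (T : finType) (r : rel T) (k : nat)
  (r_sym : symmetric r) (r_irr : irreflexive r)
  (H_tf : triangle_freeE (edges r)) (k_pos : 0 < k) :
  nu (join_Ik k r) = alpha'_ k r /\
  Posz (tau (join_Ik k r)) = (Posz (k * #|T|) - phi_ k r)%R.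
Proof. exact: main_sec. Qed.
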